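(* For a semigroup $S$ the following are equivalent: (i) $S$ is regular; (ii) $\underline{B}\cap\underline{A}=\underline{B}\circ\underline{A}$ for every IF left ideal $A=(\mu_A,\nu_A)$ and every IF right ideal $B=(\mu_B,\nu_B)$ of $S$.
   Context: A semigroup $S$ is regular if for every $a\in S$ there is $x\in S$ with $a=axa$. An intuitionistic fuzzy (IF) subset of $S$ is a pair $A=(\mu_A,\nu_A)$ of functions $S\to[0,1]$ with $\mu_A(x)+\nu_A(x)\le1$ for all $x$. $A$ is an IF right (resp. left) ideal of $S$ if $\mu_A(xy)\ge\mu_A(x)$ and $\nu_A(xy)\le\nu_A(x)$ (resp. $\mu_A(xy)\ge\mu_A(y)$ and $\nu_A(xy)\le\nu_A(y)$) for all $x,y\in S$. For $x\in S$ and $\alpha,\beta\in[0,1]$ with $\alpha+\beta\le1$, the IF point $x_{(\alpha,\beta)}$ is the IF subset of $S$ with value $(\alpha,\beta)$ at $x$ and $(0,1)$ elsewhere (so all points $x_{(0,1)}$ coincide). $\underline{S}$ is the set of all IF points of $S$; it is a semigroup under $x_{(\alpha,\beta)}\circ y_{(\gamma,\delta)}=(xy)_{(\min(\alpha,\gamma),\max(\beta,\delta))}$. For an IF subset $A$, $\underline{A}=\{x_{(\alpha,\beta)}\in\underline{S}:\mu_A(x)\ge\alpha,\ \nu_A(x)\le\beta\}$. For subsets $X,Y\subseteq\underline{S}$, $X\circ Y=\{p\circ q:p\in X,q\in Y\}$. *)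

(* Defs.v *)
From Stdlib Require Import Reals ClassicalEpsilon FunctionalExtensionality.
Open Scope R_scope.

Definition IFset (S : Type) : Type := ((S -> R) * (S -> R))%type.

Definition is_IFsubset {S : Type} (A : IFset S) : Prop :=
  forall x, 0 <= fst A x <= 1 /\ 0 <= snd A x <= 1 /\ fst A x + snd A x <= 1.

Definition IF_right_ideal {S : Type} (mul : S -> S -> S) (A : IFset S) : Prop :=
  forall x y, fst A (mul x y) >= fst A x /\ snd A (mul x y) <= snd A x.

Definition IF_left_ideal {S : Type} (mul : S -> S -> S) (A : IFset S) : Prop :=
  forall x y, fst A (mul x y) >= fst A y /\ snd A (mul x y) <= snd A y.

Definition regular {S : Type} (mul : S -> S -> S) : Prop :=
  forall a, exists x, a = mul (mul a x) a.

(* The IF point x_(a,b): value (a,b) at x and (0,1) elsewhere.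
   Points are IF subsets, so all x_(0,1) coincide as in the paper. *)
Definition ifpoint {S : Type} (x : S) (a b : R) : IFset S :=
  (fun y => if excluded_middle_informative (y = x) then a else 0,
   fun y => if excluded_middle_informative (y = x) then b else 1).

Definition valid_pair (a b : R) : Prop :=
  0 <= a <= 1 /\ 0 <= b <= 1 /\ a + b <= 1.

Definition IFpointset (S : Type) : Type := IFset S -> Prop.

Definition all_points {S : Type} : IFpointset S :=
  fun P => exists x a b, valid_pair a b /\ P = ifpoint x a b.

Definition points_of {S : Type} (A : IFset S) : IFpointset S :=
  fun P => exists x a b, valid_pair a b /\ P = ifpoint x a b /\
                         fst A x >= a /\ snd A x <= b.

Definition point_mul {S : Type} (mul : S -> S -> S) (P Q Rr : IFset S) : Prop :=
  exists x a b y c d,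
    valid_pair a b /\ valid_pair c d /\
    P = ifpoint x a b /\ Q = ifpoint y c d /\
    Rr = ifpoint (mul x y) (Rmin a c) (Rmax b d).

Definition set_comp {S : Type} (mul : S -> S -> S) (X Y : IFpointset S) : IFpointset S :=
  fun Rr => exists P Q, X P /\ Y Q /\ point_mul mul P Q Rr.

Definition set_inter {S : Type} (X Y : IFpointset S) : IFpointset S :=
  fun P => X P /\ Y P.

Definition set_eq {S : Type} (X Y : IFpointset S) : Prop :=
  forall P, X P <-> Y P.

(* Main.v *)
Require Import Defs.
From Stdlib Require Import Reals Lra ClassicalEpsilon FunctionalExtensionality.
Open Scope R_scope.

Lemma ifp_fst {S : Type} (x y : S) a b :
  fst (ifpoint x a b) y = if excluded_middle_informative (y = x) then a else 0.
Proof. reflexivity. Qed.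
Lemma ifp_snd {S : Type} (x y : S) a b :
  snd (ifpoint x a b) y = if excluded_middle_informative (y = x) then b else 1.
Proof. reflexivity. Qed.

Lemma ifpoint_bound {S : Type} (mu nu : S -> R) x a b x' a' b' :
  ifpoint x a b = ifpoint x' a' b' -> mu x' >= a' -> nu x' <= b' ->
  0 <= mu x -> nu x <= 1 -> mu x >= a /\ nu x <= b.
Proof.
  intros E H1 H2 H3 H4.
  assert (F := f_equal (fun P => fst P x) E).
  assert (G := f_equal (fun P => snd P x) E).
  unfold ifpoint in F, G; simpl in F, G.
  destruct (excluded_middle_informative (x = x)) as [_|n]; [|congruence].
  destruct (excluded_middle_informative (x = x')) as [e|n].
  - subst. lra.
  - lra.
Qed.

Definition charset {S : Type} (P : S -> Prop) : IFset S :=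
  (fun z => if excluded_middle_informative (P z) then 1 else 0,
   fun z => if excluded_middle_informative (P z) then 0 else 1).

Lemma charset_sub {S : Type} (P : S -> Prop) : is_IFsubset (charset P).
Proof.
  intro z; unfold charset; simpl; destruct (excluded_middle_informative (P z)); lra.
Qed.

Theorem theorem3p15 (S : Type) (mul : S -> S -> S)
  (assoc : forall x y z, mul x (mul y z) = mul (mul x y) z) :
  regular mul <->
  (forall A B : IFset S,
     is_IFsubset A -> IF_left_ideal mul A ->
     is_IFsubset B -> IF_right_ideal mul B ->
     set_eq (set_inter (points_of B) (points_of A))
            (set_comp mul (points_of B) (points_of A))).
Proof.
  split.
  - intros Hreg A B HA HLA HB HRB P. split.
    + intros [[x [a [b [Hv [HP [HB1 HB2]]]]]] [x' [a' [b' [Hv' [HP' [HA1 HA2]]]]]]].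
      assert (HAx : fst A x >= a /\ snd A x <= b).
      { apply (ifpoint_bound (fst A) (snd A) x a b x' a' b'); try congruence;
          destruct (HA x) as [? [? ?]]; lra. }
      destruct (Hreg x) as [t Ht].
      exists (ifpoint x a b), (ifpoint (mul t x) a b).
      split; [exists x, a, b; split; [exact Hv|split; [reflexivity|split; assumption]]|].
      split.
      { exists (mul t x), a, b; split; [exact Hv|split; [reflexivity|]];
        destruct (HLA t x); split; lra. }
      exists x, a, b, (mul t x), a, b. split; [exact Hv|split; [exact Hv|split; [reflexivity|split; [reflexivity|]]]].
      rewrite HP, assoc, <- Ht. f_equal; [unfold Rmin; destruct (Rle_dec a a)|unfold Rmax; destruct (Rle_dec b b)]; reflexivity.
    + intros [Q1 [Q2 [HQB [HQA HPM]]]].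
      destruct HQB as [x1 [a1 [b1 [Hv1 [HQ1 [HB1 HB2]]]]]].
      destruct HQA as [x2 [a2 [b2 [Hv2 [HQ2 [HA1 HA2]]]]]].
      destruct HPM as [x [a [b [y [c [d [Hva [Hvc [E1 [E2 E3]]]]]]]]]].
      assert (Bx : fst B x >= a /\ snd B x <= b).
      { apply (ifpoint_bound (fst B) (snd B) x a b x1 a1 b1); try congruence;
          destruct (HB x) as [? [? ?]]; lra. }
      assert (Ay : fst A y >= c /\ snd A y <= d).
      { apply (ifpoint_bound (fst A) (snd A) y c d x2 a2 b2); try congruence;
          destruct (HA y) as [? [? ?]]; lra. }
      assert (Hv : valid_pair (Rmin a c) (Rmax b d)).
      { unfold valid_pair in *.
        unfold Rmin, Rmax; destruct (Rle_dec a c); destruct (Rle_dec b d); lra. }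
      assert (m1 := Rmin_l a c). assert (m2 := Rmin_r a c).
      assert (M1 := Rmax_l b d). assert (M2 := Rmax_r b d).
      split.
      * exists (mul x y), (Rmin a c), (Rmax b d). split; [exact Hv|split; [exact E3|]].
        destruct (HRB x y); split; lra.
      * exists (mul x y), (Rmin a c), (Rmax b d). split; [exact Hv|split; [exact E3|]].
        destruct (HLA x y); split; lra.
  - intros H a.
    set (L := fun z => z = a \/ exists t, z = mul t a).
    set (Rr := fun z => z = a \/ exists s, z = mul a s).
    assert (HLA : IF_left_ideal mul (charset L)).
    { intros x y; unfold charset; simpl.
      destruct (excluded_middle_informative (L y)) as [[e|[t e]]|n].
      - destruct (excluded_middle_informative (L (mul x y))) as [_|n].
        + lra.
        + exfalso; apply n; right; exists x; congruence.
      - destruct (excluded_middle_informative (L (mul x y))) as [_|n].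
        + lra.
        + exfalso; apply n; right; exists (mul x t); subst; apply assoc.
      - destruct (excluded_middle_informative (L (mul x y))); lra. }
    assert (HRB : IF_right_ideal mul (charset Rr)).
    { intros x y; unfold charset; simpl.
      destruct (excluded_middle_informative (Rr x)) as [[e|[t e]]|n].
      - destruct (excluded_middle_informative (Rr (mul x y))) as [_|n].
        + lra.
        + exfalso; apply n; right; exists y; congruence.
      - destruct (excluded_middle_informative (Rr (mul x y))) as [_|n].
        + lra.
        + exfalso; apply n; right; exists (mul t y); subst; symmetry; apply assoc.
      - destruct (excluded_middle_informative (Rr (mul x y))); lra. }
    assert (Hv : valid_pair 1 0) by (unfold valid_pair; lra).
    assert (Hin : set_inter (points_of (charset Rr)) (points_of (charset L))
                    (ifpoint a 1 0)).
    { split; exists a, 1, 0; (split; [exact Hv|split; [reflexivity|]]); unfold charset; simpl.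
      - destruct (excluded_middle_informative (Rr a)) as [_|n]; [lra|].
        exfalso; apply n; left; reflexivity.
      - destruct (excluded_middle_informative (L a)) as [_|n]; [lra|].
        exfalso; apply n; left; reflexivity. }
    apply (H _ _ (charset_sub L) HLA (charset_sub Rr) HRB) in Hin.
    destruct Hin as [Q1 [Q2 [HQB [HQA HPM]]]].
    destruct HQB as [x1 [a1 [b1 [Hv1 [HQ1 [HB1 HB2]]]]]].
    destruct HQA as [x2 [a2 [b2 [Hv2 [HQ2 [HA1 HA2]]]]]].
    destruct HPM as [x [c1 [d1 [y [c [d [Hva [Hvc [E1 [E2 E3]]]]]]]]]].
    assert (Bx := ifpoint_bound _ _ x c1 d1 x1 a1 b1 ltac:(congruence) HB1 HB2
                   ltac:(destruct (charset_sub Rr x) as [? [? ?]]; lra)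
                   ltac:(destruct (charset_sub Rr x) as [? [? ?]]; lra)).
    assert (Ay := ifpoint_bound _ _ y c d x2 a2 b2 ltac:(congruence) HA1 HA2
                   ltac:(destruct (charset_sub L y) as [? [? ?]]; lra)
                   ltac:(destruct (charset_sub L y) as [? [? ?]]; lra)).
    assert (F := f_equal (fun P => fst P a) E3). unfold ifpoint in F; simpl in F.
    destruct (excluded_middle_informative (a = a)) as [_|n]; [|congruence].
    destruct (excluded_middle_informative (a = mul x y)) as [exy|n]; [|lra].
    assert (m1 := Rmin_l c1 c). assert (m2 := Rmin_r c1 c).
    unfold valid_pair in Hva, Hvc.
    unfold charset in Bx, Ay; simpl in Bx, Ay.
    destruct (excluded_middle_informative (Rr x)) as [Rx|]; [|lra].
    destruct (excluded_middle_informative (L y)) as [Ly|]; [|lra].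
    destruct Rx as [ex|[s ex]]; destruct Ly as [ey|[t ey]]; subst x y.
    + exists a. rewrite <- !exy. reflexivity.
    + exists t. rewrite exy at 1. apply assoc.
    + exists s. exact exy.
    + exists (mul s t). rewrite exy at 1. rewrite !assoc. reflexivity.
Qed.
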